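(* Suppose $(Y,y_0)$ is sequentially $0$-connected and $(X,x_0)$ is well-pointed, i.e. $\{x_0\}\to X$ is a cofibration. Then every sequence $\{f_k\}_{k\in\mathbb{N}}$ of (unbased) maps $X\to Y$ that converges to $y_0$ is sequentially homotopic to a sequence $\{g_k\}_{k\in\mathbb{N}}$ of based maps $(X,x_0)\to(Y,y_0)$ that converges to $y_0$.
   Context: All spaces Hausdorff. A sequence of maps $\{f_k\}$ into $Y$ converges to $y_0$ if for every neighborhood $U$ of $y_0$, $\operatorname{Im}(f_k)\subseteq U$ for all but finitely many $k$. Sequences $\{f_k\},\{g_k\}$ converging to $y_0$ are sequentially homotopic if there are free homotopies $H_k$ from $f_k$ to $g_k$ with $\{H_k\}$ converging to $y_0$. $(Y,y_0)$ is sequentially $0$-connected if the set of based homotopy classes $[(\mathbb{H}_0,0),(Y,y_0)]$ is a singleton, where $\mathbb{H}_0=\{0\}\cup\{1/m:m\in\mathbb{N}\}\subseteq\mathbb{R}$ with basepoint $0$. *)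

(* Defs.v *)
From HB Require Import structures.
From mathcomp Require Import all_boot all_order all_algebra.
From mathcomp Require Import all_classical all_reals topology.
From mathcomp Require Import Rstruct Rstruct_topology.
From Stdlib Require Rdefinitions.
Notation R := Rdefinitions.R.
Set Implicit Arguments. Unset Strict Implicit. Unset Printing Implicit Defensive.
Import Order.TTheory GRing.Theory Num.Theory.
Local Open Scope classical_set_scope.
Local Open Scope ring_scope.

Definition unitI : set R := [set t : R | 0 <= t <= 1].

Definition is_homotopy {X Y : topologicalType} (H : X * R -> Y) : Prop :=
  {within [set p : X * R | unitI p.2], continuous H}.

Definition homotopy_from_to {X Y : topologicalType} (H : X * R -> Y)
    (f g : X -> Y) : Prop :=
  [/\ is_homotopy H, (forall x, H (x, 0) = f x) & (forall x, H (x, 1) = g x)].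

Definition seq_maps_converge {X Y : topologicalType} (f : nat -> X -> Y)
    (y0 : Y) : Prop :=
  forall U : set Y, nbhs y0 U ->
    exists N : nat, forall k : nat, leq N k -> range (f k) `<=` U.

Definition seq_homotopies_converge {X Y : topologicalType}
    (H : nat -> X * R -> Y) (y0 : Y) : Prop :=
  forall U : set Y, nbhs y0 U ->
    exists N : nat, forall k : nat, leq N k ->
      H k @` [set p : X * R | unitI p.2] `<=` U.

Definition seq_homotopic {X Y : topologicalType} (f g : nat -> X -> Y)
    (y0 : Y) : Prop :=
  exists H : nat -> X * R -> Y,
    (forall k, homotopy_from_to (H k) (f k) (g k)) /\
    seq_homotopies_converge H y0.

Definition H0 : set R := [set t : R | t = 0 \/ exists m : nat, leq 1 m /\ t = m%:R^-1].

(* Based maps (H_0, 0) -> (Y, y0), represented by functions R -> Y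
   continuous on the subspace H_0 (values off H_0 are irrelevant). *)
Definition based_H0_map {Y : topologicalType} (y0 : Y) (a : R -> Y) : Prop :=
  {within H0, continuous a} /\ a 0 = y0.

Definition based_H0_homotopic {Y : topologicalType} (y0 : Y) (a b : R -> Y) : Prop :=
  exists G : R * R -> Y,
    [/\ {within [set p : R * R | H0 p.1 /\ unitI p.2], continuous G},
        (forall s, H0 s -> G (s, 0) = a s),
        (forall s, H0 s -> G (s, 1) = b s) &
        (forall t, unitI t -> G (0, t) = y0)].

(* (Y, y0) is sequentially 0-connected: [(H_0,0),(Y,y0)] is a singleton.
   This set is always nonempty (constant map), so this says any two based
   maps are based-homotopic. *)
Definition seq_0_connected {Y : topologicalType} (y0 : Y) : Prop :=
  forall a b : R -> Y, based_H0_map y0 a -> based_H0_map y0 b ->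
    based_H0_homotopic y0 a b.

(* A homotopy {x0} x I -> Z is encoded as a path p : R -> Z on [0,1]. *)
Definition well_pointed {X : topologicalType} (x0 : X) : Prop :=
  forall (Z : topologicalType) (f : X -> Z) (p : R -> Z),
    continuous f -> {within unitI, continuous p} -> p 0 = f x0 ->
    exists H : X * R -> Z,
      [/\ is_homotopy H, (forall x, H (x, 0) = f x) &
          (forall t, unitI t -> H (x0, t) = p t)].

(* Main.v *)
Require Import Defs.
From HB Require Import structures.
From mathcomp Require Import all_boot all_order all_algebra.
From mathcomp Require Import all_classical all_reals topology.
From mathcomp Require Import Rstruct Rstruct_topology.
From mathcomp Require Import normedtype sequences.
From mathcomp Require Import lra.
Import Order.TTheory GRing.Theory Num.Theory.
Local Open Scope classical_set_scope.
Local Open Scope ring_scope.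
Lemma ptws_continuous {T Y : topologicalType} (h : T -> {ptws nat -> Y}) :
  (forall k, continuous (fun t => h t k)) -> continuous h.
Proof.
move=> hk t; apply/cvg_sup => i.
apply/cvg_image.
  rewrite eqEsubset; split => v // _; exists (fun _ => v) => //.
move=> V /= /(hk i t) nV; exists ((fun f : {ptws nat -> Y} => f i) @^-1` V).
  by [].
by rewrite image_preimage //; rewrite eqEsubset; split => v // _; exists (fun _ => v).
Qed.
Lemma sval_cont {Z : topologicalType} (S : set Z) :
  continuous (set_val : set_type S -> Z).
Proof. exact: initial_continuous. Qed.

Lemma into_set_type {T Z : topologicalType} (S : set Z) (h : T -> set_type S) :
  continuous (set_val \o h) -> continuous h.
Proof. exact: (@continuous_comp_initial (set_type S) T Z set_val). Qed.

Lemma within_comp_in {T U Y : topologicalType} (D : set U) (G : U -> Y) (h : T -> U) :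
  {within D, continuous G} -> continuous h -> (forall t, D (h t)) ->
  continuous (G \o h).
Proof.
move=> /subspace_sigL_continuousP cG ch hD.
pose h' := fun t => (exist _ (h t) (mem_set (hD t)) : set_type D).
have -> : G \o h = sigL D G \o h' by [].
move=> t; apply: continuous_comp; last exact: cG.
by apply: into_set_type => s; apply: ch.
Qed.

Definition clamp (t : R) : R := Order.min (Order.max t 0) 1.

Lemma clamp_cont : continuous clamp.
Proof.
have h1 : continuous (fun t : R => Order.max t 0).
  move=> s; apply: (@continuous_comp _ _ _ (fun s : R => (s, (0:R))) (fun xy : R * R => Order.max xy.1 xy.2) s).
    exact: (@cvg_pair _ _ _ (nbhs s) (nbhs s) (nbhs (0:R)) _ _ _ id (cst 0) cvg_id (cvg_cst _)).
  exact: (@max_continuous _ (numFieldTopology.Real_sort__canonical__order_topology_OrderTopological R)).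
move=> t; apply: (@continuous_comp _ _ _ (fun s : R => (Order.max s 0, (1:R))) (fun xy : R * R => Order.min xy.1 xy.2) t).
  exact: (@cvg_pair _ _ _ (nbhs t) (nbhs (Order.max t 0)) (nbhs (1:R)) _ _ _ (fun s : R => Order.max s 0) (cst 1) (h1 t) (cvg_cst _)).
exact: (@min_continuous _ (numFieldTopology.Real_sort__canonical__order_topology_OrderTopological R)).
Qed.

Lemma clampI t : unitI (clamp t).
Proof.
rewrite /unitI /clamp /=; apply/andP; split.
- by rewrite le_min ler01 le_max lexx orbT.
- by rewrite ge_min lexx orbT.
Qed.

Lemma clamp_id t : unitI t -> clamp t = t.
Proof.
rewrite /unitI /clamp /= => /andP[h0 h1].
by rewrite (max_l h0) (min_l h1).
Qed.
Lemma trunc_round (m : nat) (x : R) :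
  `|x - m%:R| < 2^-1 -> Num.truncn (x + 2^-1) = m.
Proof.
rewrite ltr_norml => /andP[h1 h2].
have h2i : (2^-1 + 2^-1 : R) = 1 by rewrite [RHS]splitr div1r.
have H : m%:R <= x + 2^-1 < m.+1%:R.
  rewrite -addn1 natrD; move: h1 h2 h2i; set h := (2^-1 : R) => h1 h2 h2i.
  apply/andP; split; lra.
exact: truncn_def.
Qed.

Definition aseq {Y : Type} (y0 : Y) (c : nat -> Y) (s : R) : Y :=
  if s == 0 then y0 else c (Num.truncn (s^-1 + 2^-1)).-1.

Lemma aseq_inv {Y : Type} (y0 : Y) c (m : nat) : (0 < m)%N ->
  aseq y0 c (m%:R^-1) = c m.-1.
Proof.
move=> m0; rewrite /aseq invr_eq0 pnatr_eq0; case: eqP => [m00|_]; first by rewrite m00 in m0.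
rewrite invrK.
rewrite (@trunc_round m) // subrr normr0 invr_gt0 ltr0n //.
Qed.

Lemma aseq_cont {Y : topologicalType} (y0 : Y) (c : nat -> Y) :
  (forall U, nbhs y0 U -> exists N, forall k, (N <= k)%N -> U (c k)) ->
  {within H0, continuous (aseq y0 c)}.
Proof.
move=> hc; apply/subspace_continuousP => s [-> | [m [m1 ->]]].
- rewrite /from_subspace {2}/aseq eqxx => U nU; have [N hN] := hc U nU.
  have := @nbhs0_lt _ R^o (N.+1%:R^-1) _.
  rewrite invr_gt0 ltr0n => /(_ isT); apply: filterS => s0 hs [->|[n [n1 sn]]]; last rewrite sn in hs *.
    by rewrite /= /aseq eqxx; exact: nbhs_singleton nU.
  rewrite /= aseq_inv //; apply: hN.
  move: hs; rewrite ger0_norm ?invr_ge0 ?ler0n // ltf_pV2 ?posrE ?ltr0n //.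
  by rewrite ltr_nat; clear sn; case: n n1 => // n _ /=; rewrite ltnS => /ltnW.
- rewrite /from_subspace aseq_inv // => U nU.
  have m0 : (m%:R^-1 : R) != 0 by rewrite invr_eq0 pnatr_eq0 -lt0n.
  have hI : (fun t : R^o => t^-1) @ (m%:R^-1 : R^o) --> ((m%:R^-1)^-1 : R^o) := inv_continuous m0.
  move: hI => /cvgrPdist_lt => /(_ (2^-1)); rewrite invr_gt0 ltr0n => /(_ isT).
  rewrite invrK; apply: filterS => t ht _.
  have e : aseq y0 c t = c m.-1.
    rewrite /aseq; have [t0|t0] := eqVneq t 0.
      move: ht; rewrite t0 invr0 subr0 ger0_norm ?ler0n //.
      have : (1 : R) <= m%:R by rewrite ler1n.
      have h2i : (2^-1 + 2^-1 : R) = 1 by rewrite [RHS]splitr div1r.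
      have : (0 : R) < 2^-1 by rewrite invr_gt0 ltr0n.
      move: h2i; set h := (2^-1 : R) => ? ? ? ?; exfalso; lra.
    by rewrite (@trunc_round m) // distrC.
  change (U (aseq y0 c t)); rewrite e; exact: nbhs_singleton nU.
Qed.

Lemma unitI_itv : unitI = `[0, 1]%classic.
Proof. by apply/seteqP; split => t /=; rewrite /unitI /= in_itv /=. Qed.

Lemma tube {Y : topologicalType} (G : R * R -> Y) (y0 : Y) :
  {within [set p : R * R | H0 p.1 /\ unitI p.2], continuous G} ->
  (forall t, unitI t -> G (0, t) = y0) ->
  forall U, nbhs y0 U -> exists N, forall k, (N <= k)%N ->
    forall t, unitI t -> U (G (k.+1%:R^-1, t)).
Proof.
move=> /subspace_continuousP cG G0 U nU.
have cI : compact unitI by rewrite unitI_itv; exact: segment_compact.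
have := (compact_near_coveringP unitI).1 cI nat \oo
  (fun k t => unitI t -> U (G (k.+1%:R^-1, t))) _.
case.
- move=> t It.
  have := cG (0, t) (conj (or_introl erefl) It).
  rewrite /from_subspace G0 // => /(_ U nU).
  rewrite /= /within /= => -[[A B] /= [nA nB] sAB].
  have hA : \forall k \near \oo, A (k.+1%:R^-1).
    exact: (@cvg_harmonic R _ nA).
  exists (B, [set k | A (k.+1%:R^-1)]) => //= -[t' k] /= [Bt' Ak] It'.
  apply: (sAB (k.+1%:R^-1, t')) => //.
  split => //=; right; exists k.+1; split => //.
- move=> N _ hN; exists N => k Nk t It; exact: (hN k Nk t It It).
Qed.

Theorem proposition2p27 (X Y : topologicalType) (x0 : X) (y0 : Y) :
  hausdorff_space X -> hausdorff_space Y ->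
  seq_0_connected y0 -> well_pointed x0 ->
  forall f : nat -> X -> Y,
    (forall k, continuous (f k)) -> seq_maps_converge f y0 ->
    exists g : nat -> X -> Y,
      [/\ (forall k, continuous (g k)), (forall k, g k x0 = y0),
          seq_maps_converge g y0 & seq_homotopic f g y0].
Proof.
move=> _ _ h0c wp f fc fconv.
pose c := fun k => f k x0.
have hc : forall U, nbhs y0 U -> exists N, forall k, (N <= k)%N -> U (c k).
  move=> U nU; have [N hN] := fconv U nU; exists N => k Nk.
  by apply: (hN k Nk); exists x0.
have aB : based_H0_map y0 (aseq y0 c).
  by split; [exact: aseq_cont | rewrite /aseq eqxx].
have bB : based_H0_map y0 (fun _ => y0).
  by split => //; apply: continuous_subspaceT => ?; exact: cvg_cst.
have [G [cG G0 G1 Gy]] := h0c _ _ aB bB.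
have Hk1 : forall k : nat, H0 (k.+1%:R^-1).
  by move=> k; right; exists k.+1.
pose S : set {ptws nat -> Y} := [set z | forall k, (exists x, f k x = z k) \/
   (exists2 t, unitI t & z k = G (k.+1%:R^-1, t))].
have SF : forall x, (fun k => f k x) \in S.
  by move=> x; apply/mem_set => k; left; exists x.
have SP : forall t, (fun k => G (k.+1%:R^-1, clamp t)) \in S.
  by move=> t; apply/mem_set => k; right; exists (clamp t) => //; exact: clampI.
pose Fz : X -> set_type S := fun x => exist (fun z => z \in S) (fun k => f k x) (SF x).
pose Pz : R -> set_type S := fun t => exist (fun z => z \in S) (fun k => G (k.+1%:R^-1, clamp t)) (SP t).
have cF : continuous Fz.
  apply: into_set_type; apply: ptws_continuous => k; exact: fc.
have cP : {within unitI, continuous Pz}.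
  apply: continuous_subspaceT; apply: into_set_type; apply: ptws_continuous => k.
  apply: (@within_comp_in _ _ _ _ G (fun t => (k.+1%:R^-1, clamp t)) cG).
    move=> t.
    exact: (@cvg_pair _ _ _ (nbhs t) (nbhs (k.+1%:R^-1 : R)) (nbhs (clamp t)) _ _ _ (cst (k.+1%:R^-1)) clamp (cvg_cst _) (clamp_cont t)).
  by move=> t; split; [exact: Hk1 | exact: clampI].
have P0 : Pz 0 = Fz x0.
  apply: val_inj => /=; apply: funext => k.
  have I0 : unitI 0 by rewrite /unitI /= lexx ler01.
  by rewrite clamp_id // (G0 _ (Hk1 k)) aseq_inv.
have [H [cH Hx Hx0]] := wp _ Fz Pz cF cP P0.
pose Hk := fun k q => set_val (H q) k.
have cHk : forall k, is_homotopy (Hk k).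
  move=> k; rewrite /is_homotopy /Hk.
  apply: (@within_continuous_comp _ _ _ _ H (fun z : set_type S => set_val z k)) => //.
  move=> z _.
  exact: (@continuous_comp _ _ _ set_val (fun w : {ptws nat -> Y} => w k) z (@sval_cont _ S z) (@proj_continuous nat (fun=> Y) k _)).
have Hconv : forall U, nbhs y0 U -> exists N, forall k, (N <= k)%N -> forall q, U (Hk k q).
  move=> U nU; have [N1 hN1] := fconv U nU.
  have [N2 hN2] := @tube _ G y0 cG Gy U nU.
  exists (maxn N1 N2) => k Nk q.
  have hS : S (set_val (H q)) := set_valP (H q).
  rewrite /Hk; case: (hS k) => [[x <-]|[t It ->]].
    by apply: (hN1 k); [exact: leq_trans (leq_maxl _ _) Nk | exists x].
  by apply: (hN2 k) => //; exact: leq_trans (leq_maxr _ _) Nk.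
exists (fun k x => Hk k (x, 1)); split.
- move=> k.
  apply: (@within_comp_in _ _ _ _ (Hk k) (fun x => (x, 1)) (cHk k)).
    move=> x.
    exact: (@cvg_pair _ _ _ (nbhs x) (nbhs x) (nbhs (1 : R)) _ _ _ id (cst 1) cvg_id (cvg_cst _)).
  by move=> x; rewrite /unitI /= lexx ler01.
- move=> k; have I1 : unitI 1 by rewrite /unitI /= lexx ler01.
  rewrite /Hk (Hx0 _ I1); change (G (k.+1%:R^-1, clamp 1) = y0).
  by rewrite clamp_id // (G1 _ (Hk1 k)).
- move=> U nU; have [N hN] := Hconv U nU; exists N => k Nk _ [x _ <-].
  exact: hN.
- exists Hk; split.
    move=> k; split => //= x.
    by rewrite /Hk Hx.
  move=> U nU; have [N hN] := Hconv U nU; exists N => k Nk _ [q _ <-].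
  exact: hN.
Qed.
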